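(* Let $P$ and $Q$ be locally finite posets and let $f:P\to Q$, $g:Q\to P$ be order-preserving maps forming a Galois connection $f\dashv g$, i.e. $f(x)\le_Q y \iff x\le_P g(y)$ for all $x\in P$, $y\in Q$. Extend $f$ linearly to a map $\mathbf{k}P\to\mathbf{k}Q$. For $x\in P$ and $a\in Q$ let $\omega_x^P=\sum_{x\le_P y}\mu_P(x,y)\,y$ and $\omega_a^Q=\sum_{a\le_Q b}\mu_Q(a,b)\,b$. Then for every $x\in P$, \[ f(\omega_x^P)=\sum_{a\in Q\,:\,g(a)=x}\omega_a^Q. \]
   Context: $\mathbf{k}$ is a field of characteristic $0$. For a poset $P$, $\mathbf{k}P$ denotes the vector space with basis the elements of $P$ (the linearization of $P$). $\mu_P$ denotes the Möbius function of $P$: $\mu_P(x,x)=1$ and $\mu_P(x,y)=-\sum_{x\le z<y}\mu_P(x,z)$ for $x<y$ (and $0$ if $x\not\le y$). The elements $\omega_x^P$ are called the inverted basis of $\mathbf{k}P$. (Sums are assumed to make sense, e.g. for the relevant posets finite.) *)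

(* Defs.v *)
From HB Require Import structures.
From mathcomp Require Import all_boot all_order all_algebra.
Set Implicit Arguments. Unset Strict Implicit. Unset Printing Implicit Defensive.
Import Order.TTheory GRing.Theory.
Local Open Scope ring_scope.

(* Linearization kP of a finite poset P: formal k-linear combinations of the
   elements of P, represented by their coefficient function {ffun P -> k^o}. *)
Section Linearization.
Variable k : fieldType.

Definition basisv (P : finType) (x : P) : {ffun P -> k^o} :=
  [ffun y => if y == x then 1 else 0].

Definition linext (P Q : finType) (f : P -> Q) (v : {ffun P -> k^o}) : {ffun Q -> k^o} :=
  \sum_(x : P) v x *: basisv (f x).

(* Möbius function, by the recursion mu(x,x)=1,
   mu(x,y) = - sum_{x <= z < y} mu(x,z) for x < y, and 0 if not x <= y.
   Fuel #|P| suffices since every chain has at most #|P| elements. *)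
Fixpoint mobius_aux (d : Order.disp_t) (P : finPOrderType d) (n : nat) (x y : P) : k :=
  match n with
  | 0 => 0
  | n'.+1 =>
      if x == y then 1
      else if (x <= y)%O then
        - \sum_(z : P | (x <= z)%O && (z < y)%O) mobius_aux n' x z
      else 0
  end.

Definition mobius (d : Order.disp_t) (P : finPOrderType d) (x y : P) : k :=
  mobius_aux #|P| x y.

Definition omega (d : Order.disp_t) (P : finPOrderType d) (x : P) : {ffun P -> k^o} :=
  \sum_(y : P | (x <= y)%O) mobius x y *: basisv y.

End Linearization.

(* Main.v *)
Require Import Defs.
From HB Require Import structures.
From mathcomp Require Import all_boot all_order all_algebra.
Import Order.TTheory GRing.Theory.
Local Open Scope ring_scope.

Section Aux.
Variable k : fieldType.

Lemma scaleE (T : finType) (a : k) (v : {ffun T -> k^o}) y : (a *: v) y = a * v y.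
Proof. by rewrite ffunE. Qed.

Lemma basisvE (T : finType) (x y : T) : @basisv k T x y = (y == x)%:R.
Proof. by rewrite ffunE; case: eqP. Qed.

Section Mob.
Variables (d : Order.disp_t) (P : finPOrderType d).

Definition rk (x y : P) := #|[set z : P | (x <= z)%O && (z < y)%O]|.

Lemma rk_lt {x y z : P} : (x <= z)%O -> (z < y)%O -> (rk x z < rk x y)%N.
Proof.
move=> xz zy; apply: proper_card; apply/properP; split.
  apply/subsetP => w; rewrite !inE => /andP[-> wz] /=; exact: lt_trans wz zy.
by exists z; rewrite !inE ?xz ?zy ?ltxx ?andbF.
Qed.

Lemma rk_card (x y : P) : (rk x y < #|P|)%N.
Proof.
apply: proper_card; apply/properP; split; first exact/subsetP.
by exists y => //; rewrite !inE ltxx andbF.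
Qed.

Lemma aux_stable n : forall m (x y : P), (rk x y < n)%N -> (rk x y < m)%N ->
  @mobius_aux k d P n x y = @mobius_aux k d P m x y.
Proof.
elim: n => [|n IH] [|m] x y //= hn hm.
rewrite !ltnS in hn hm.
case: eqP => // _; case: ifP => // _; congr (- _).
apply: eq_bigr => z /andP[xz zy]; apply: IH.
  by apply: leq_trans hn; apply: rk_lt.
by apply: leq_trans hm; apply: rk_lt.
Qed.

Lemma mob_rec (x y : P) : (x < y)%O ->
  @mobius k d P x y = - \sum_(z : P | (x <= z)%O && (z < y)%O) @mobius k d P x z.
Proof.
move=> xy; rewrite /mobius.
have := rk_card x y; case E: #|P| => [|n] // _ /=.
rewrite (lt_eqF xy) (ltW xy); congr (- _); apply: eq_bigr => z /andP[xz zy].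
apply: (@aux_stable n n.+1); last by rewrite -E; exact: rk_card.
have := rk_lt xz zy; have := rk_card x y; rewrite E ltnS; move=> h1 h2; exact: leq_trans h2 h1.
Qed.

Lemma mob_refl (x : P) : @mobius k d P x x = 1.
Proof.
rewrite /mobius; have := rk_card x x; case: #|P| => [|n] //= _.
by rewrite eqxx.
Qed.

Lemma mob_sum {x z : P} : (x <= z)%O ->
  \sum_(y : P | (x <= y)%O && (y <= z)%O) @mobius k d P x y = (x == z)%:R.
Proof.
move=> xz; case: (eqVneq x z) => [<-|xnz].
  rewrite (big_pred1 x) ?mob_refl // => y; rewrite -eq_le eq_sym //.
have xltz : (x < z)%O by rewrite lt_neqAle xnz xz.
rewrite (bigD1 z) /=; last by rewrite xz lexx.
rewrite mob_rec // addrC (eq_bigl (fun y => (x <= y)%O && (y < z)%O)).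
  by rewrite addrN.
move=> y /=; rewrite lt_def; case: (eqVneq y z) => [->|ne]; first by rewrite ?eqxx !andbF.
by rewrite /= andbT.
Qed.

Lemma omegaE (x y : P) :
  @omega k d P x y = if (x <= y)%O then @mobius k d P x y else 0.
Proof.
rewrite /omega sum_ffunE.
rewrite (eq_bigr (fun z => if z == y then mobius k x z else 0)); last first.
  by move=> z _; rewrite scaleE basisvE eq_sym; case: eqP; rewrite ?mulr1 ?mulr0.
rewrite -big_mkcondr /=.
case: ifP => xy.
  by rewrite (big_pred1 y) // => z /=; case: (eqVneq z y) => [->|_]; rewrite ?xy ?andbF ?andbT.
by rewrite big_pred0 // => z /=; case: (eqVneq z y) => [->|_]; rewrite ?xy ?andbF ?andbT.
Qed.

Lemma omega_down (x c : P) :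
  \sum_(b : P | (b <= c)%O) @omega k d P x b = (x == c)%:R.
Proof.
rewrite (eq_bigr (fun b => if (x <= b)%O then mobius k x b else 0)); last first.
  by move=> b _; rewrite omegaE.
rewrite -big_mkcondr /=.
case: (boolP (x <= c)%O) => xc.
  rewrite -(mob_sum xc); apply: eq_bigl => y; by case: (y <= c)%O; case: (x <= y)%O.
rewrite big_pred0; last first.
  by move=> y; apply/negP => /andP[yc xy]; move: xc; rewrite (le_trans xy yc).
by case: eqP xc => // ->; rewrite lexx.
Qed.

Lemma below_lt {b c : P} : (b < c)%O ->
  (#|[set z : P | (z < b)%O]| < #|[set z : P | (z < c)%O]|)%N.
Proof.
move=> bc; apply: proper_card; apply/properP; split.
  apply/subsetP => w; rewrite !inE => wb; exact: lt_trans wb bc.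
by exists b; rewrite !inE ?bc ?ltxx.
Qed.

Lemma down_unique (F G : P -> k) :
  (forall c, \sum_(b : P | (b <= c)%O) F b = \sum_(b : P | (b <= c)%O) G b) ->
  forall c, F c = G c.
Proof.
move=> H c.
suff h: forall n c, (#|[set z : P | (z < c)%O]| < n)%N -> F c = G c.
  exact: (h #|[set z : P | (z < c)%O]|.+1).
elim=> [//|n IH] {}c hc.
move: (H c); rewrite (bigD1 c) //= [X in _ = X](bigD1 c) //=.
have -> : \sum_(b | (b <= c)%O && (b != c)) F b = \sum_(b | (b <= c)%O && (b != c)) G b.
  apply: eq_bigr => b /andP[bc bnc]; apply: IH.
  have bltc : (b < c)%O by rewrite lt_def eq_sym bnc bc.
  have := below_lt bltc; rewrite ltnS in hc; move=> h1; exact: leq_trans h1 hc.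
exact: addIr.
Qed.
End Mob.

Lemma linextE (T U : finType) (f : T -> U) (v : {ffun T -> k^o}) b :
  @linext k T U f v b = \sum_(y | f y == b) v y.
Proof.
rewrite /linext sum_ffunE [RHS]big_mkcond; apply: eq_bigr => y _.
by rewrite scaleE basisvE eq_sym; case: eqP; rewrite ?mulr1 ?mulr0.
Qed.

Lemma linext_down (d : Order.disp_t) (U : finPOrderType d) (T : finType)
   (f : T -> U) (v : {ffun T -> k^o}) (c : U) :
  \sum_(b | (b <= c)%O) @linext k T U f v b = \sum_(y | (f y <= c)%O) v y.
Proof.
rewrite (partition_big f (fun b => (b <= c)%O)) //.
apply: eq_bigr => b bc; rewrite linextE; apply: eq_bigl => y.
by case: eqP => [->|]; rewrite ?bc ?andbF.
Qed.
End Aux.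

Theorem mainTheorem1 (k : fieldType) (hk : [pchar k] =i pred0)
  (dP dQ : Order.disp_t) (P : finPOrderType dP) (Q : finPOrderType dQ)
  (f : P -> Q) (g : Q -> P)
  (hf : {homo f : x y / (x <= y)%O})
  (hg : {homo g : x y / (x <= y)%O})
  (hgal : forall (x : P) (y : Q), (f x <= y)%O = (x <= g y)%O)
  (x : P) :
  @linext k P Q f (@omega k dP P x) = \sum_(a : Q | g a == x) @omega k dQ Q a.
Proof.
apply/ffunP; apply: down_unique => c.
rewrite linext_down (eq_bigl (fun y => (y <= g c)%O)); last by move=> y; exact: hgal.
rewrite omega_down.
under eq_bigr do rewrite sum_ffunE.
rewrite exchange_big /=.
under eq_bigr do rewrite omega_down.
rewrite big_mkcond (bigD1 c) //= big1 ?addr0 => [|a /negbTE ac]; last by rewrite ac; case: ifP.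
by rewrite eqxx eq_sym; case: eqP.
Qed.
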